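(* For every integer $m \geq 0$ and every real $\eta > -1$, $$ \pi = \frac{4^{m+1}}{\binom{2m}{m}(2m+1)}\cdot \frac{ {}_{3}F_{2}\!\!\left[ \begin{matrix} \tfrac{1}{2}-m,1,-\eta \\ \tfrac{3}{2}+m,2+\eta \end{matrix} \ \Bigg| \ -1 \right]}{ {}_{3}F_{2}\!\!\left[ \begin{matrix} \tfrac{1}{2}-m,\tfrac{1}{2},1+\eta \\ 1,2+\eta \end{matrix} \ \Bigg| \ 1 \right]}.$$
   Context: ${}_pF_q\left[\begin{matrix} a_1,\dots,a_p\\ b_1,\dots,b_q\end{matrix}\,\Big|\, z\right] = \sum_{n\ge 0} \frac{(a_1)_n\cdots(a_p)_n}{(b_1)_n\cdots(b_q)_n}\frac{z^n}{n!}$ with $(x)_n = \Gamma(x+n)/\Gamma(x)$. *)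

(* Defs.v *)
From Stdlib Require Import Reals List Arith Factorial.
From Coquelicot Require Import Coquelicot.
Import ListNotations.
Open Scope R_scope.

Fixpoint poch (x : R) (n : nat) : R :=
  match n with
  | O => 1
  | S k => poch x k * (x + INR k)
  end.

Definition poch_prod (l : list R) (n : nat) : R :=
  fold_right (fun x acc => poch x n * acc) 1 l.

Definition hyp_term (a b : list R) (z : R) (n : nat) : R :=
  poch_prod a n / poch_prod b n * z ^ n / INR (Factorial.fact n).

Definition is_pFq (a b : list R) (z v : R) : Prop :=
  is_series (hyp_term a b z) v.

(* Main.v *)
Require Import Defs.
From Stdlib Require Import Reals Lra Lia Arith List.
Import ListNotations.
From Coquelicot Require Import Coquelicot.
Open Scope R_scope.

Lemma ser_lim (a : nat -> R) (l : R) : is_series a l <-> is_lim_seq (fun N => sum_f_R0 a N) l.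
Proof.
  split; intro H.
  - apply (is_lim_seq_ext (sum_n a)); [intro; apply sum_n_Reals| exact H].
  - apply (is_lim_seq_ext _ (sum_n a)) in H; [exact H| intro; symmetry; apply sum_n_Reals].
Qed.

Lemma ser_plus (a b : nat -> R) (la lb : R) : is_series a la -> is_series b lb ->
  is_series (fun n => a n + b n) (la + lb).
Proof.
  rewrite !ser_lim; intros Ha Hb.
  apply (is_lim_seq_ext (fun N => sum_f_R0 a N + sum_f_R0 b N)).
  - intro; rewrite sum_plus; auto.
  - apply is_lim_seq_plus'; auto.
Qed.

Lemma ser_scal (a : nat -> R) (la k : R) : is_series a la -> is_series (fun n => k * a n) (k * la).
Proof.
  rewrite !ser_lim; intros Ha.
  apply (is_lim_seq_ext (fun N => k * sum_f_R0 a N)).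
  - intro; rewrite scal_sum; apply sum_eq; intros; ring.
  - apply (is_lim_seq_scal_l _ k la) in Ha; exact Ha.
Qed.

Lemma ser_ext (a b : nat -> R) (l : R) : (forall n, a n = b n) -> is_series a l -> is_series b l.
Proof. intros H; apply (is_series_ext (K:=R_AbsRing) (V:=R_NormedModule)); auto. Qed.

Lemma ser_uniq (a : nat -> R) (l1 l2 : R) : is_series a l1 -> is_series a l2 -> l1 = l2.
Proof. intros H1 H2; apply is_series_unique in H1; apply is_series_unique in H2; congruence. Qed.

Lemma ser_le_ex (a b : nat -> R) : (forall n, Rabs (a n) <= b n) -> ex_series b -> ex_series a.
Proof. intros H Hb; apply (ex_series_le a b); auto. Qed.

Lemma sum_nonneg_le f n j : (forall k, 0 <= f k) -> (j <= n)%nat -> f j <= sum_f_R0 f n.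
Proof.
  intros Hf; induction n; intros Hj.
  - replace j with 0%nat by lia; simpl; lra.
  - simpl. destruct (Nat.eq_dec j (S n)).
    + subst. assert (0 <= sum_f_R0 f n) by (apply cond_pos_sum; auto). lra.
    + specialize (IHn ltac:(lia)). specialize (Hf (S n)); lra.
Qed.

Lemma sum_mono f n N : (forall k, 0 <= f k) -> (n <= N)%nat -> sum_f_R0 f n <= sum_f_R0 f N.
Proof.
  intros Hf H; induction H; [lra|]. simpl. specialize (Hf (S m)); lra.
Qed.

Lemma sum_tail0 f n N : (forall k, (n < k)%nat -> f k = 0) -> (n <= N)%nat -> sum_f_R0 f N = sum_f_R0 f n.
Proof.
  intros Hf H; induction H; [reflexivity|]. simpl. rewrite IHle, Hf; [ring|lia].
Qed.

Lemma sum_abs_le f g N : (forall k, Rabs (f k) <= g k) -> Rabs (sum_f_R0 f N) <= sum_f_R0 g N.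
Proof.
  intros H; induction N; simpl; [apply H|].
  eapply Rle_trans; [apply Rabs_triang|]. specialize (H (S N)); lra.
Qed.

Section Interchange.
Variables (c : nat -> R) (L : nat -> nat -> R) (w : nat -> R).
Hypotheses (Hc : ex_series (fun n => Rabs (c n)))
  (HL0 : forall n j, 0 <= L n j) (HLz : forall n j, (n < j)%nat -> L n j = 0)
  (HL1 : forall n, sum_f_R0 (L n) n = 1) (Hw : forall j, Rabs (w j) <= 1).

Lemma L_sum_le1 n N : sum_f_R0 (L n) N <= 1.
Proof.
  destruct (le_lt_dec N n).
  - rewrite <- (HL1 n); apply sum_mono; auto.
  - rewrite (sum_tail0 _ n N); [rewrite HL1; lra| |lia]. intros; apply HLz; lia.
Qed.

Lemma L_le1 n j : L n j <= 1.
Proof.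
  destruct (le_lt_dec j n).
  - rewrite <- (HL1 n); apply sum_nonneg_le; auto.
  - rewrite HLz; [lra|lia].
Qed.

Let q N n := c n * sum_f_R0 (fun j => L n j * w j) N.

Lemma q_bound N n : Rabs (q N n) <= Rabs (c n).
Proof.
  unfold q; rewrite Rabs_mult.
  assert (Rabs (sum_f_R0 (fun j => L n j * w j) N) <= 1).
  { eapply Rle_trans; [apply (sum_abs_le _ (L n))|apply L_sum_le1].
    intro k; rewrite Rabs_mult, (Rabs_right (L n k)) by (apply Rle_ge; auto).
    specialize (Hw k); specialize (HL0 n k); nra. }
  pose proof (Rabs_pos (c n)); nra.
Qed.

Lemma col_ex j : ex_series (fun n => c n * L n j).
Proof.
  apply (ser_le_ex _ (fun n => Rabs (c n))); auto.
  intro n; rewrite Rabs_mult, (Rabs_right (L n j)) by (apply Rle_ge; auto).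
  pose proof (L_le1 n j); pose proof (HL0 n j); pose proof (Rabs_pos (c n)); nra.
Qed.

Lemma q_series N : is_series (q N) (sum_f_R0 (fun j => Series (fun n => c n * L n j) * w j) N).
Proof.
  unfold q; induction N; simpl.
  - apply (ser_ext (fun n => w 0%nat * (c n * L n 0%nat))); [intro; ring|].
    rewrite Rmult_comm; apply ser_scal, Series_correct, col_ex.
  - apply (ser_ext (fun n => c n * sum_f_R0 (fun j => L n j * w j) N + w (S N) * (c n * L n (S N)))).
    + intro; ring.
    + rewrite (Rmult_comm (Series _)). apply ser_plus; auto.
      apply ser_scal, Series_correct, col_ex.
Qed.

Lemma interchange : exists S,
  is_series (fun n => c n * sum_f_R0 (fun j => L n j * w j) n) S /\
  is_series (fun j => Series (fun n => c n * L n j) * w j) S.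
Proof.
  set (r := fun n => q n n).
  assert (Hr : ex_series r).
  { apply (ser_le_ex _ (fun n => Rabs (c n))); auto. intro; apply q_bound. }
  exists (Series r); split; [apply Series_correct; exact Hr|].
  apply ser_lim.
  set (e := fun N => 2 * (Series (fun n => Rabs (c n)) - sum_f_R0 (fun n => Rabs (c n)) N)).
  assert (He : is_lim_seq e 0).
  { replace 0 with (2 * (Series (fun n => Rabs (c n)) - Series (fun n => Rabs (c n)))) by ring.
    unfold e. apply (is_lim_seq_scal_l _ 2 (Series (fun n : nat => Rabs (c n)) - Series (fun n : nat => Rabs (c n)))).
    apply is_lim_seq_minus'; [apply is_lim_seq_const|].
    apply ser_lim, Series_correct; auto. }
  assert (Hb : forall N, Rabs (sum_f_R0 (fun j => Series (fun n => c n * L n j) * w j) N - Series r) <= e N).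
  { intro N. rewrite <- (is_series_unique _ _ (q_series N)).
    assert (Hq : ex_series (q N)).
    { apply (ser_le_ex _ (fun n => Rabs (c n))); auto. intro; apply q_bound. }
    rewrite <- Series_minus by auto.
    assert (Hd : ex_series (fun n => Rabs (q N n - r n))).
    { apply (ser_le_ex _ (fun n => 2 * Rabs (c n))).
      - intro n. rewrite Rabs_Rabsolu. eapply Rle_trans; [apply Rabs_triang|].
        rewrite Rabs_Ropp. pose proof (q_bound N n); pose proof (q_bound n n). unfold r; lra.
      - apply (ex_series_scal_l 2) in Hc. exact Hc. }
    eapply Rle_trans; [apply Series_Rabs; exact Hd|].
    rewrite (Series_incr_n _ (S N)) by (auto; lia).
    unfold e. rewrite (Series_incr_n (fun n => Rabs (c n)) (S N)) by (auto; lia).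
    simpl pred.
    rewrite (sum_eq_R0 (fun n => Rabs (q N n - r n))).
    2:{ intros n Hn. unfold r, q.
        rewrite (sum_tail0 (fun j => L n j * w j) n N); [|intros; rewrite HLz; [ring|lia]|lia].
        rewrite Rminus_diag, Rabs_R0; reflexivity. }
    replace (2 * (sum_f_R0 (fun n : nat => Rabs (c n)) N + Series (fun k : nat => Rabs (c (S N + k)%nat)) -
                  sum_f_R0 (fun n : nat => Rabs (c n)) N)) with (Series (fun k => 2 * Rabs (c (S N + k)%nat)))
      by (rewrite Series_scal_l; ring).
    rewrite Rplus_0_l. apply Series_le.
    - intro k. split; [apply Rabs_pos|].
      eapply Rle_trans; [apply Rabs_triang|]. rewrite Rabs_Ropp.
      pose proof (q_bound N (S N + k)); pose proof (q_bound (S N + k) (S N + k)). unfold r; lra.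
    - apply (ex_series_scal_l 2) in Hc. apply ex_series_incr_n with (n := S N) in Hc. exact Hc. }
  apply (is_lim_seq_le_le (fun N => Series r - e N) _ (fun N => Series r + e N)).
  - intro N. specialize (Hb N). apply Rabs_le_between' in Hb. lra.
  - replace (Finite (Series r)) with (Finite (Series r - 0)) by (f_equal; ring).
    apply is_lim_seq_minus'; [apply is_lim_seq_const|auto].
  - replace (Finite (Series r)) with (Finite (Series r + 0)) by (f_equal; ring).
    apply is_lim_seq_plus'; [apply is_lim_seq_const|auto].
Qed.
End Interchange.

Definition cc (m n : nat) : R := poch (1/2 - INR m) n * poch (1/2) n / (INR (fact n))^2.
Definition dd (m n : nat) : R := poch (1/2 - INR m) n / poch (3/2 + INR m) n.
Definition MM (x : R) (n : nat) : R := poch (-x) n * (-1)^n / poch (2+x) n.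
Definition mu (x : R) (n : nat) : R := (1+x)/(INR n + 1 + x).

Lemma poch_S x n : poch x (S n) = poch x n * (x + INR n).
Proof. reflexivity. Qed.

Lemma poch1 n : poch 1 n = INR (fact n).
Proof.
  induction n; [simpl; reflexivity|]. rewrite poch_S, IHn.
  rewrite fact_simpl, mult_INR, S_INR. ring.
Qed.

Lemma poch_pos x n : 0 < x -> 0 < poch x n.
Proof.
  intros Hx; induction n; simpl; [lra|].
  pose proof (pos_INR n). apply Rmult_lt_0_compat; lra.
Qed.

Lemma fact_pos n : 0 < INR (fact n).
Proof. apply lt_0_INR, lt_O_fact. Qed.

Lemma poch_shift x n : poch (1+x) n * (INR n + 1 + x) = (1+x) * poch (2+x) n.
Proof.
  induction n; [simpl; ring|].
  rewrite !poch_S, S_INR. replace (poch (1 + x) n * (1 + x + INR n) * (INR n + 1 + 1 + x))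
    with ((poch (1 + x) n * (INR n + 1 + x)) * (2 + x + INR n)) by ring.
  rewrite IHn; ring.
Qed.

Lemma hyp2 m eta n : -1 < eta ->
  hyp_term [1/2 - INR m; 1/2; 1+eta] [1; 2+eta] 1 n = cc m n * mu eta n.
Proof.
  intros He. unfold hyp_term, poch_prod, cc, mu; simpl.
  rewrite pow1, poch1.
  pose proof (fact_pos n). pose proof (poch_pos (2+eta) n ltac:(lra)).
  pose proof (pos_INR n).
  pose proof (poch_shift eta n).
  replace (poch (1 + eta) n) with ((1+eta) * poch (2+eta) n / (INR n + 1 + eta))
    by (field_simplify_eq; [lra|lra]).
  field. repeat split; lra.
Qed.

Lemma hyp1 m eta n : -1 < eta ->
  hyp_term [1/2 - INR m; 1; -eta] [3/2 + INR m; 2+eta] (-1) n = dd m n * MM eta n.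
Proof.
  intros He. unfold hyp_term, poch_prod, dd, MM; simpl.
  rewrite poch1.
  pose proof (fact_pos n). pose proof (poch_pos (2+eta) n ltac:(lra)).
  pose proof (poch_pos (3/2 + INR m) n ltac:(pose proof (pos_INR m); lra)).
  field. repeat split; lra.
Qed.

Lemma MM_S x n : -1 <= x -> MM x (S n) = MM x n * (x - INR n) / (x + 2 + INR n).
Proof.
  intros Hx. unfold MM. rewrite !poch_S. simpl pow.
  pose proof (poch_pos (2+x) n ltac:(lra)). pose proof (pos_INR n).
  field. lra.
Qed.

Lemma MM_0 x : MM x 0 = 1.
Proof. unfold MM; simpl; field. Qed.

Lemma MM_bound x n : -1 <= x -> Rabs (MM x n) <= 1.
Proof.
  intros Hx; induction n.
  - rewrite MM_0, Rabs_R1; lra.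
  - rewrite MM_S by auto. pose proof (pos_INR n).
    unfold Rdiv. rewrite !Rabs_mult, Rabs_inv, (Rabs_right (x + 2 + INR n)) by lra.
    assert (Rabs (x - INR n) <= x + 2 + INR n) by (apply Rabs_le; lra).
    assert (Rabs (x - INR n) * / (x + 2 + INR n) <= 1).
    { apply (Rmult_le_reg_r (x + 2 + INR n)); [lra|].
      rewrite Rmult_assoc, Rinv_l by lra. lra. }
    pose proof (Rabs_pos (MM x n)). pose proof (Rabs_pos (x - INR n)).
    assert (0 <= / (x + 2 + INR n)) by (left; apply Rinv_0_lt_compat; lra).
    nra.
Qed.

Lemma MM_m1 n : MM (-1) n = (-1)^n.
Proof.
  induction n; [apply MM_0|]. rewrite MM_S by lra. rewrite IHn. simpl.
  pose proof (pos_INR n). field. lra.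
Qed.

Lemma cc_S m n : cc m (S n) = cc m n * (INR n + 1/2 - INR m) * (INR n + 1/2) / (INR n + 1)^2.
Proof.
  unfold cc. rewrite !poch_S, fact_simpl, mult_INR, S_INR.
  pose proof (fact_pos n). pose proof (pos_INR n). field. lra.
Qed.

Lemma dd_S m n : dd m (S n) = dd m n * (INR n + 1/2 - INR m) / (INR n + 3/2 + INR m).
Proof.
  unfold dd. rewrite !poch_S.
  pose proof (poch_pos (3/2 + INR m) n ltac:(pose proof (pos_INR m); lra)).
  pose proof (pos_INR n); pose proof (pos_INR m). field. lra.
Qed.

Lemma cc_0 m : cc m 0 = 1.
Proof. unfold cc; simpl; field. Qed.
Lemma dd_0 m : dd m 0 = 1.
Proof. unfold dd; simpl; field. Qed.

Lemma cc_rel m n : cc m n * (-1/2 - INR m) = cc (S m) n * (INR n - 1/2 - INR m).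
Proof.
  induction n.
  - rewrite !cc_0, INR_0; lra.
  - rewrite !cc_S, S_INR. pose proof (pos_INR n).
    replace (cc m n * (INR n + 1 / 2 - INR m) * (INR n + 1 / 2) / (INR n + 1) ^ 2 * (-1 / 2 - INR m))
      with ((cc m n * (-1 / 2 - INR m)) * (INR n + 1 / 2 - INR m) * (INR n + 1 / 2) / (INR n + 1) ^ 2)
      by (field; lra).
    rewrite IHn, S_INR. field. lra.
Qed.

Lemma cc0_pos n : 0 < cc 0 n.
Proof.
  unfold cc. simpl INR. replace (1/2 - 0) with (1/2) by ring.
  pose proof (poch_pos (1/2) n ltac:(lra)). pose proof (fact_pos n).
  apply Rdiv_lt_0_compat; [nra|]. apply pow_lt; lra.
Qed.

Lemma mu_pos x n : -1 < x -> 0 < mu x n.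
Proof. intros; unfold mu; pose proof (pos_INR n); apply Rdiv_lt_0_compat; lra. Qed.

Definition LL (n j : nat) : R :=
  if (j <=? n)%nat then (2*INR j+1) * (INR (fact n))^2 / (INR (fact (n-j)) * INR (fact (n+j+1))) else 0.

Lemma LL_z n j : (n < j)%nat -> LL n j = 0.
Proof. intros H; unfold LL; destruct (Nat.leb_spec j n); [lia|reflexivity]. Qed.

Lemma LL_nonneg n j : 0 <= LL n j.
Proof.
  unfold LL; destruct (Nat.leb_spec j n); [|lra].
  pose proof (fact_pos n); pose proof (fact_pos (n-j)); pose proof (fact_pos (n+j+1)); pose proof (pos_INR j).
  apply Rmult_le_pos; [apply Rmult_le_pos; [lra| apply pow_le; lra]|].
  left; apply Rinv_0_lt_compat; nra.
Qed.

Lemma LL_R1 n j : (j <= n)%nat ->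
  LL n (S j) * ((2*INR j+1)*(INR n+INR j+2)) = LL n j * ((2*INR j+3)*(INR n-INR j)).
Proof.
  intros H. destruct (Nat.eq_dec j n) as [->|Hne].
  - rewrite LL_z by lia. ring.
  - destruct (Nat.le_exists_sub (S j) n ltac:(lia)) as [k [Hk _]]. subst n.
    unfold LL. destruct (Nat.leb_spec (S j) (k + S j)); [|lia].
    destruct (Nat.leb_spec j (k + S j)); [|lia].
    replace (k + S j - S j)%nat with k by lia.
    replace (k + S j - j)%nat with (S k) by lia.
    replace (k + S j + S j + 1)%nat with (S (k + S j + j + 1)) by lia.
    rewrite (fact_simpl k), (fact_simpl (k + S j + j + 1)), !mult_INR.
    pose proof (fact_pos k) as P1; pose proof (fact_pos (k + S j + j + 1)) as P2; pose proof (fact_pos (k + S j)) as P3.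
    set (F1 := INR (fact k)) in *; set (F2 := INR (fact (k + S j + j + 1))) in *; set (F3 := INR (fact (k + S j))) in *.
    pose proof (pos_INR k); pose proof (pos_INR j).
    rewrite !S_INR, !plus_INR, !S_INR.
    set (K := INR k) in *; set (J := INR j) in *.
    rewrite ?INR_0 in *. field. repeat split; nra.
Qed.

Lemma LL_R2 n j : (j <= S n)%nat ->
  LL n j * (INR n + 1)^2 = LL (S n) j * ((INR n + 1 - INR j)*(INR n+INR j+2)).
Proof.
  intros H. destruct (Nat.eq_dec j (S n)) as [->|Hne].
  - rewrite LL_z by lia. rewrite S_INR. ring.
  - destruct (Nat.le_exists_sub j n ltac:(lia)) as [k [Hk _]]. subst n.
    unfold LL. destruct (Nat.leb_spec j (k + j)); [|lia].
    destruct (Nat.leb_spec j (S (k + j))); [|lia].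
    replace (k + j - j)%nat with k by lia.
    replace (S (k + j) - j)%nat with (S k) by lia.
    replace (S (k + j) + j + 1)%nat with (S (k + j + j + 1)) by lia.
    rewrite (fact_simpl k), (fact_simpl (k + j + j + 1)), (fact_simpl (k + j)), !mult_INR.
    pose proof (fact_pos k) as P1; pose proof (fact_pos (k + j + j + 1)) as P2; pose proof (fact_pos (k + j)) as P3.
    set (F1 := INR (fact k)) in *; set (F2 := INR (fact (k + j + j + 1))) in *; set (F3 := INR (fact (k + j))) in *.
    pose proof (pos_INR k); pose proof (pos_INR j).
    rewrite !S_INR, !plus_INR, ?S_INR, ?INR_0.
    set (K := INR k) in *; set (J := INR j) in *.
    field. repeat split; nra.
Qed.

Lemma LL_00 : LL 0 0 = 1.
Proof. unfold LL; simpl. field. Qed.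

Lemma tele (g : nat -> R) N : sum_f_R0 (fun j => g (S j) - g j) N = g (S N) - g 0%nat.
Proof. induction N; simpl; [ring|]. rewrite IHN; ring. Qed.

Definition GG x n j := -(x+1+INR j)*(INR j)^2*(INR n+INR j+2)/((2*INR j+1)*(INR n+1)^2) * LL (S n) j * MM x j.

Lemma GG_step x n j : -1 <= x -> (j <= S n)%nat ->
  (INR n+2+x)*LL (S n) j*MM x j - (INR n+1+x)*LL n j*MM x j = GG x n (S j) - GG x n j.
Proof.
  intros Hx Hj. unfold GG.
  pose proof (LL_R1 (S n) j Hj) as R1. pose proof (LL_R2 n j Hj) as R2.
  rewrite MM_S by auto. rewrite !S_INR in *.
  pose proof (pos_INR n); pose proof (pos_INR j).
  set (N := INR n) in *; set (J := INR j) in *.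
  set (A := LL (S n) j) in *. set (B := LL (S n) (S j)) in *. set (C := LL n j) in *.
  set (Mj := MM x j).
  assert (HB : B = A * ((2 * J + 3) * (N + 1 - J)) / ((2 * J + 1) * (N + 1 + J + 2))) by (field_simplify_eq; [lra|lra]).
  assert (HC : C = A * ((N + 1 - J) * (N + J + 2)) / (N+1)^2) by (field_simplify_eq; [lra|nra]).
  rewrite HB, HC. field. repeat split; nra.
Qed.

Lemma GG_0 x n : GG x n 0 = 0.
Proof. unfold GG. rewrite INR_0. field. pose proof (pos_INR n); lra. Qed.

Lemma GG_end x n : GG x n (S (S n)) = 0.
Proof. unfold GG. rewrite (LL_z (S n) (S (S n))) by lia. ring. Qed.

Definition SS x n := sum_f_R0 (fun j => LL n j * MM x j) n.

Lemma SS_rec x n : -1 <= x -> (INR n+2+x) * SS x (S n) = (INR n+1+x) * SS x n.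
Proof.
  intros Hx. unfold SS.
  assert (E : sum_f_R0 (fun j => LL n j * MM x j) n = sum_f_R0 (fun j => LL n j * MM x j) (S n)).
  { simpl. rewrite LL_z by lia. ring. }
  rewrite E, !scal_sum.
  apply Rminus_diag_uniq.
  rewrite <- minus_sum.
  rewrite (sum_eq _ (fun j => GG x n (S j) - GG x n j)).
  - rewrite tele, GG_0, GG_end. ring.
  - intros j Hj. rewrite <- GG_step by (auto; lia). ring.
Qed.

Lemma FI1 x n : -1 <= x -> (INR n + 1 + x) * SS x n = 1 + x.
Proof.
  intros Hx; induction n.
  - unfold SS; simpl sum_f_R0. rewrite LL_00, MM_0, INR_0. ring.
  - rewrite S_INR. replace (INR n + 1 + 1 + x) with (INR n + 2 + x) by ring.
    rewrite SS_rec by auto. exact IHn.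
Qed.

Definition GG' n j := -(INR j)^2*(INR n+INR j+2)/((2*INR j+1)*(INR n+1)^2) * LL (S n) j.

Lemma GG'_step n j : (j <= S n)%nat ->
  LL (S n) j - LL n j = GG' n (S j) - GG' n j.
Proof.
  intros Hj. unfold GG'.
  pose proof (LL_R1 (S n) j Hj) as R1. pose proof (LL_R2 n j Hj) as R2.
  rewrite !S_INR in *.
  pose proof (pos_INR n); pose proof (pos_INR j).
  set (N := INR n) in *; set (J := INR j) in *.
  set (A := LL (S n) j) in *. set (B := LL (S n) (S j)) in *. set (C := LL n j) in *.
  assert (HB : B = A * ((2 * J + 3) * (N + 1 - J)) / ((2 * J + 1) * (N + 1 + J + 2))) by (field_simplify_eq; [lra|lra]).
  assert (HC : C = A * ((N + 1 - J) * (N + J + 2)) / (N+1)^2) by (field_simplify_eq; [lra|nra]).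
  rewrite HB, HC. field. repeat split; nra.
Qed.

Lemma LL_sum1 n : sum_f_R0 (LL n) n = 1.
Proof.
  induction n.
  - simpl. apply LL_00.
  - rewrite <- IHn.
    assert (E : sum_f_R0 (LL n) n = sum_f_R0 (LL n) (S n)).
    { simpl. rewrite (LL_z n (S n)) by lia. ring. }
    rewrite E. apply Rminus_diag_uniq. rewrite <- minus_sum.
    rewrite (sum_eq _ (fun j => GG' n (S j) - GG' n j)).
    + rewrite tele. unfold GG'. rewrite (LL_z (S n) (S (S n))) by lia. rewrite INR_0.
      rewrite !S_INR. pose proof (pos_INR n). field. repeat split; nra.
    + intros j Hj. apply GG'_step; lia.
Qed.

Lemma sum_S (f : nat -> R) N : sum_f_R0 f (S N) = sum_f_R0 f N + f (S N).
Proof. reflexivity. Qed.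

Lemma lim_inv : is_lim_seq (fun n => / (INR n + 1)) 0.
Proof.
  apply is_lim_seq_spec. intro eps.
  destruct (archimed_cor1 eps (cond_pos eps)) as [N [HN HN0]].
  exists N. intros n Hn. rewrite Rminus_0_r.
  pose proof (pos_INR n). rewrite Rabs_right by (left; apply Rinv_0_lt_compat; lra).
  eapply Rle_lt_trans; [|exact HN].
  apply Rinv_le_contravar. apply lt_0_INR; lia.
  apply le_INR in Hn; lra.
Qed.

Lemma lim_bound (u : nat -> R) C m : (forall n, (m <= n)%nat -> Rabs (u n) <= C / (INR n + 1)) ->
  is_lim_seq u 0.
Proof.
  intros H. apply is_lim_seq_abs_0.
  apply (is_lim_seq_le_le_loc (fun _ => 0) _ (fun n => C * / (INR n + 1))).
  - exists m. intros n Hn. split; [apply Rabs_pos|]. apply H; auto.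
  - apply is_lim_seq_const.
  - replace (Finite 0) with (Rbar_mult C 0) by (simpl; f_equal; ring).
    apply is_lim_seq_scal_l, lim_inv.
Qed.

Lemma decr_bound (f : nat -> R) m : (forall n, (m <= n)%nat -> f (S n) <= f n) ->
  forall n, (m <= n)%nat -> f n <= f m.
Proof.
  intros H n Hn. induction Hn; [lra|]. specialize (H m0 Hn). lra.
Qed.

Lemma ex_inv_sq : ex_series (fun k => / (INR k + 1)^2).
Proof.
  apply (ser_le_ex _ (fun k => 2 * (/ (INR k + 1) - / (INR k + 2)))).
  - intro k. pose proof (pos_INR k).
    rewrite Rabs_right by (left; apply Rinv_0_lt_compat, pow_lt; lra).
    set (K := INR k) in *.
    assert (E1: /(K+1)^2 = (K+2) * / ((K+1)^2*(K+2))) by (field; lra).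
    assert (E2: 2*(/(K+1) - /(K+2)) = (2*(K+1)) * / ((K+1)^2*(K+2))) by (field; lra).
    rewrite E1, E2. apply Rmult_le_compat_r; [|lra].
    left; apply Rinv_0_lt_compat. apply Rmult_lt_0_compat; [apply pow_lt|]; lra.
  - exists 2. apply ser_lim.
    apply (is_lim_seq_ext (fun N => 2 * (1 - / (INR N + 2)))).
    + intro N. induction N.
      * simpl sum_f_R0. rewrite INR_0, !Rplus_0_l, Rinv_1. lra.
      * rewrite sum_S, <- IHN, S_INR. pose proof (pos_INR N). set (X := INR N) in *. field. lra.
    + replace (Finite 2) with (Rbar_mult 2 (1 - 0)) by (simpl; f_equal; ring).
      apply is_lim_seq_scal_l. apply is_lim_seq_minus'; [apply is_lim_seq_const|].
      apply (lim_bound _ 1 0). intros n _. pose proof (pos_INR n).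
      rewrite Rabs_right by (left; apply Rinv_0_lt_compat; lra).
      unfold Rdiv; rewrite Rmult_1_l. apply Rinv_le_contravar; lra.
Qed.

Lemma cc_bound m : (1 <= m)%nat -> exists C, forall n, (m <= n)%nat -> Rabs (cc m n) * (INR n)^2 <= C.
Proof.
  intros Hm. exists (Rabs (cc m m) * (INR m)^2).
  apply (decr_bound (fun n => Rabs (cc m n) * (INR n)^2)).
  intros n Hn. rewrite cc_S, S_INR.
  apply le_INR in Hn. apply le_INR in Hm. rewrite INR_1 in Hm.
  set (N := INR n) in *. set (Mr := INR m) in *.
  replace (cc m n * (N + 1/2 - Mr) * (N + 1/2) / (N+1)^2) with (cc m n * ((N + 1/2 - Mr) * (N + 1/2) / (N+1)^2)) by (field; lra).
  rewrite Rabs_mult, (Rabs_right (_ / _)).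
  2:{ apply Rle_ge, Rdiv_le_0_compat; [nra|apply pow_lt; lra]. }
  pose proof (Rabs_pos (cc m n)).
  replace (Rabs (cc m n) * ((N + 1 / 2 - Mr) * (N + 1 / 2) / (N + 1) ^ 2) * (N + 1) ^ 2)
    with (Rabs (cc m n) * ((N + 1 / 2 - Mr) * (N + 1 / 2))) by (field; lra).
  apply Rmult_le_compat_l; [lra|]. nra.
Qed.

Lemma cc_abs_ex m : (1 <= m)%nat -> ex_series (fun n => Rabs (cc m n)).
Proof.
  intros Hm. destruct (cc_bound m Hm) as [C HC].
  apply (ex_series_incr_n _ m).
  apply (ser_le_ex _ (fun k => C * / (INR k + 1)^2)).
  - intro k. rewrite Rabs_Rabsolu. specialize (HC (m + k)%nat ltac:(lia)).
    rewrite plus_INR in *. apply le_INR in Hm. rewrite INR_1 in Hm. pose proof (pos_INR k).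
    set (K := INR k) in *. set (Mr := INR m) in *.
    pose proof (Rabs_pos (cc m (m+k))).
    assert (E : Rabs (cc m (m + k)) = Rabs (cc m (m + k)) * (Mr + K) ^ 2 * / (Mr + K)^2) by (field; lra).
    rewrite E. apply Rmult_le_compat; try lra.
    + apply Rmult_le_pos; [lra| apply pow_le; lra].
    + left; apply Rinv_0_lt_compat, pow_lt; lra.
    + apply Rinv_le_contravar; [apply pow_lt; lra|]. apply pow_incr; lra.
  - pose proof ex_inv_sq as HE. apply (ex_series_scal_l C) in HE. exact HE.
Qed.

Lemma cc_lim m : (1 <= m)%nat -> is_lim_seq (fun n => INR n * cc m n) 0.
Proof.
  intros Hm. destruct (cc_bound m Hm) as [C HC].
  apply (lim_bound _ (2 * C) m). intros n Hn. specialize (HC n Hn).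
  apply le_INR in Hn. apply le_INR in Hm. rewrite INR_1 in Hm.
  set (N := INR n) in *. pose proof (Rabs_pos (cc m n)).
  rewrite Rabs_mult, Rabs_right by lra.
  assert (E : N * Rabs (cc m n) = Rabs (cc m n) * N ^ 2 / N) by (field; lra).
  rewrite E. replace (2 * C / (N + 1)) with (C * (2 / (N+1))) by (field; lra).
  unfold Rdiv at 1. apply Rmult_le_compat; try lra.
  + apply Rmult_le_pos; [lra| apply pow_le; lra].
  + left; apply Rinv_0_lt_compat; lra.
  + apply (Rmult_le_reg_r (N * (N+1))); [nra|]. field_simplify; lra.
Qed.

Lemma dd_bound m : (1 <= m)%nat -> exists C, forall j, (m <= j)%nat -> INR j * (INR j + 1) * Rabs (dd m j) <= C.
Proof.
  intros Hm. exists (INR m * (INR m + 1) * Rabs (dd m m)).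
  apply (decr_bound (fun j => INR j * (INR j + 1) * Rabs (dd m j))).
  intros n Hn. rewrite dd_S, S_INR.
  apply le_INR in Hn. apply le_INR in Hm. rewrite INR_1 in Hm.
  set (N := INR n) in *. set (Mr := INR m) in *.
  replace (dd m n * (N + 1/2 - Mr) / (N + 3/2 + Mr)) with (dd m n * ((N + 1/2 - Mr) / (N + 3/2 + Mr))) by (field; lra).
  rewrite Rabs_mult, (Rabs_right (_ / _)).
  2:{ apply Rle_ge, Rdiv_le_0_compat; lra. }
  pose proof (Rabs_pos (dd m n)).
  replace ((N + 1) * (N + 1 + 1) * (Rabs (dd m n) * ((N + 1 / 2 - Mr) / (N + 3 / 2 + Mr))))
    with (Rabs (dd m n) * ((N + 1) * (N + 2) * (N + 1 / 2 - Mr) / (N + 3 / 2 + Mr))) by (field; lra).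
  replace (N * (N + 1) * Rabs (dd m n)) with (Rabs (dd m n) * (N * (N+1))) by ring.
  apply Rmult_le_compat_l; [lra|].
  apply (Rmult_le_reg_r (N + 3/2 + Mr)); [lra|]. field_simplify; [|lra]. nra.
Qed.

Lemma dd_lim m : (1 <= m)%nat -> is_lim_seq (fun j => INR j * dd m j) 0.
Proof.
  intros Hm. destruct (dd_bound m Hm) as [C HC].
  apply (lim_bound _ C m). intros n Hn. specialize (HC n Hn).
  apply le_INR in Hn. apply le_INR in Hm. rewrite INR_1 in Hm.
  set (N := INR n) in *. pose proof (Rabs_pos (dd m n)).
  rewrite Rabs_mult, (Rabs_right N) by lra.
  apply (Rmult_le_reg_r (N+1)); [lra|]. field_simplify; lra.
Qed.

Lemma dd0 j : dd 0 j = / (2 * INR j + 1).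
Proof.
  induction j.
  - rewrite dd_0, INR_0. field.
  - rewrite dd_S, IHj, S_INR, INR_0. pose proof (pos_INR j). set (J := INR j) in *. field. lra.
Qed.

Definition TT m j := Series (fun n => cc m n * LL n j).

Lemma LL_le1 n j : LL n j <= 1.
Proof. apply (L_le1 LL LL_nonneg LL_z LL_sum1). Qed.

Lemma col_ser m j : (1 <= m)%nat -> is_series (fun n => cc m n * LL n j) (TT m j).
Proof.
  intros Hm. apply Series_correct. apply (col_ex (cc m) LL (cc_abs_ex m Hm) LL_nonneg LL_z LL_sum1).
Qed.

Definition HH m j n := - (4*(INR j+1)*(INR n - INR j)/(2*INR j+1) * cc m n * LL n j).

Lemma HH_step m j n :
  (3/2 + INR m + INR j) * (cc m n * LL n (S j)) - (1/2 - INR m + INR j) * (cc m n * LL n j)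
  = HH m j (S n) - HH m j n.
Proof.
  unfold HH. destruct (le_lt_dec j n) as [Hjn|Hnj].
  - pose proof (LL_R1 n j Hjn) as R1. pose proof (LL_R2 n j ltac:(lia)) as R2.
    rewrite cc_S. rewrite S_INR in *.
    apply le_INR in Hjn.
    pose proof (pos_INR j). pose proof (pos_INR m).
    set (N := INR n) in *; set (J := INR j) in *; set (Mr := INR m) in *.
    set (A := LL n j) in *. set (B := LL n (S j)) in *. set (D := LL (S n) j) in *.
    assert (HB : B = A * ((2 * J + 3) * (N - J)) / ((2 * J + 1) * (N + J + 2))) by (field_simplify_eq; [lra|lra]).
    assert (HD : D = A * (N+1)^2 / ((N + 1 - J) * (N + J + 2))) by (field_simplify_eq; [lra|nra]).
    rewrite HB, HD. field. repeat split; nra.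
  - rewrite (LL_z n j Hnj), (LL_z n (S j)) by lia.
    destruct (Nat.eq_dec (S n) j) as [<-|Hne].
    + rewrite Rminus_diag. unfold Rdiv. ring.
    + rewrite (LL_z (S n) j) by lia. unfold Rdiv. ring.
Qed.

Lemma HH_0 m j : HH m j 0 = 0.
Proof.
  unfold HH. destruct j.
  - rewrite Rminus_diag. unfold Rdiv. ring.
  - rewrite LL_z by lia. unfold Rdiv. ring.
Qed.

Lemma HH_lim m j : (1 <= m)%nat -> is_lim_seq (HH m j) 0.
Proof.
  intros Hm.
  assert (H1 : is_lim_seq (fun n => Rabs (INR n * cc m n)) 0).
  { replace (Finite 0) with (Rbar_abs 0) by (simpl; rewrite Rabs_R0; reflexivity).
    apply is_lim_seq_abs, cc_lim; auto. }
  assert (H2 : is_lim_seq (fun n => Rabs (cc m n)) 0) by (apply ex_series_lim_0, cc_abs_ex; auto).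
  set (K := 4 * (INR j + 1) / (2 * INR j + 1)).
  apply is_lim_seq_abs_0.
  apply (is_lim_seq_le_le (fun _ => 0) _ (fun n => K * (Rabs (INR n * cc m n) + INR j * Rabs (cc m n)))).
  - intro n. split; [apply Rabs_pos|]. unfold HH.
    pose proof (pos_INR j). pose proof (pos_INR n). pose proof (LL_nonneg n j). pose proof (LL_le1 n j).
    assert (E : - (4 * (INR j + 1) * (INR n - INR j) / (2 * INR j + 1) * cc m n * LL n j)
               = - K * (INR n * cc m n - INR j * cc m n) * LL n j) by (unfold K; field; lra).
    rewrite E, (Rabs_mult (- K * _)), (Rabs_mult (- K)), Rabs_Ropp.
    assert (0 <= K) by (unfold K; apply Rdiv_le_0_compat; lra).
    rewrite (Rabs_right K), (Rabs_right (LL n j)) by lra.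
    assert (Rabs (INR n * cc m n - INR j * cc m n) <= Rabs (INR n * cc m n) + INR j * Rabs (cc m n)).
    { eapply Rle_trans; [apply Rabs_triang|]. rewrite Rabs_Ropp, (Rabs_mult (INR j)), (Rabs_right (INR j)) by lra. lra. }
    pose proof (Rabs_pos (INR n * cc m n - INR j * cc m n)).
    apply Rle_trans with (K * Rabs (INR n * cc m n - INR j * cc m n)).
    + rewrite <- (Rmult_1_r (K * Rabs (INR n * cc m n - INR j * cc m n))) at 2.
      apply Rmult_le_compat_l; [apply Rmult_le_pos|]; lra.
    + apply Rmult_le_compat_l; lra.
  - apply is_lim_seq_const.
  - replace (Finite 0) with (Rbar_mult K (0 + INR j * 0)) by (simpl; f_equal; ring).
    apply is_lim_seq_scal_l. apply is_lim_seq_plus'; auto.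
    replace (INR j * 0) with (INR j * 0) by ring.
    apply (is_lim_seq_scal_l _ (INR j) 0) in H2. simpl in H2. exact H2.
Qed.

Lemma TT_rec m j : (1 <= m)%nat ->
  (3/2 + INR m + INR j) * TT m (S j) = (1/2 - INR m + INR j) * TT m j.
Proof.
  intros Hm. apply Rminus_diag_uniq.
  pose proof (ser_plus _ _ _ _ (ser_scal _ _ (3/2 + INR m + INR j) (col_ser m (S j) Hm))
                               (ser_scal _ _ (-(1/2 - INR m + INR j)) (col_ser m j Hm))) as HS.
  apply ser_lim in HS.
  eapply is_lim_seq_ext in HS.
  2:{ intro N. rewrite (sum_eq _ (fun n => HH m j (S n) - HH m j n)).
      - rewrite tele, HH_0, Rminus_0_r. reflexivity.
      - intros n _. rewrite <- HH_step. ring. }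
  pose proof (proj1 (is_lim_seq_incr_1 _ _) (HH_lim m j Hm)) as HL.
  apply is_lim_seq_unique in HS. apply is_lim_seq_unique in HL.
  rewrite HL in HS. injection HS as HS. lra.
Qed.

Lemma TT_dd m j : (1 <= m)%nat -> TT m j = TT m 0 * dd m j.
Proof.
  intros Hm. induction j.
  - rewrite dd_0. ring.
  - pose proof (TT_rec m j Hm) as R. rewrite dd_S.
    pose proof (pos_INR j); pose proof (pos_INR m).
    apply (Rmult_eq_reg_l (3/2 + INR m + INR j)); [|lra].
    rewrite R, IHj. field. lra.
Qed.

Lemma dd_rel m j : dd (S m) j * ((INR j - 1/2 - INR m) * (INR j + 3/2 + INR m))
                 = dd m j * (- (1/2 + INR m) * (3/2 + INR m)).
Proof.
  induction j.
  - rewrite !dd_0, INR_0. field.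
  - rewrite !dd_S. rewrite !S_INR in *. pose proof (pos_INR j); pose proof (pos_INR m).
    set (J := INR j) in *; set (Mr := INR m) in *.
    replace (dd m j * (J + 1 / 2 - Mr) / (J + 3 / 2 + Mr) * (- (1 / 2 + Mr) * (3 / 2 + Mr)))
      with ((dd m j * (- (1 / 2 + Mr) * (3 / 2 + Mr))) * (J + 1 / 2 - Mr) / (J + 3 / 2 + Mr)) by (field; lra).
    rewrite <- IHj. field. lra.
Qed.

Lemma odd_nz j m : 2 * INR j - 2 * INR m - 1 <> 0.
Proof.
  destruct (le_lt_dec j m) as [H|H]; apply le_INR in H; rewrite ?S_INR in H; lra.
Qed.

Lemma odd_abs j m : 1 <= Rabs (2 * INR j - 2 * INR m - 1).
Proof.
  destruct (le_lt_dec j m) as [H|H]; apply le_INR in H; rewrite ?S_INR in H.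
  - rewrite Rabs_left by lra. lra.
  - rewrite Rabs_right by lra. lra.
Qed.

Lemma dd_lim0 m : (1 <= m)%nat -> is_lim_seq (dd m) 0.
Proof.
  intros Hm. destruct (dd_bound m Hm) as [C HC].
  apply (lim_bound _ C m). intros n Hn. specialize (HC n Hn).
  apply le_INR in Hn. apply le_INR in Hm. rewrite INR_1 in Hm.
  pose proof (Rabs_pos (dd m n)).
  apply (Rmult_le_reg_r (INR n + 1)); [lra|]. field_simplify; [|lra].
  assert (0 <= (INR n - 1)*(INR n + 1)*Rabs (dd m n)) by (apply Rmult_le_pos; [apply Rmult_le_pos|]; lra). nra.
Qed.

Definition Kc (m : nat) : R := PI * Binomial.C (2 * m) m * (2 * INR m + 1) / 4 ^ (m + 1).

Lemma binom_pos n k : 0 < Binomial.C n k.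
Proof.
  unfold Binomial.C. pose proof (fact_pos n); pose proof (fact_pos k); pose proof (fact_pos (n-k)).
  apply Rdiv_lt_0_compat; nra.
Qed.

Lemma Kc_pos m : 0 < Kc m.
Proof.
  unfold Kc. pose proof PI_RGT_0. pose proof (binom_pos (2*m) m). pose proof (pos_INR m).
  apply Rdiv_lt_0_compat; [|apply pow_lt; lra].
  apply Rmult_lt_0_compat; [nra|lra].
Qed.

Lemma Kc_S m : Kc (S m) = Kc m * (2 * INR m + 3) / (2 * (INR m + 1)).
Proof.
  unfold Kc, Binomial.C.
  replace (2 * S m - S m)%nat with (S m) by lia.
  replace (2 * m - m)%nat with m by lia.
  replace (2 * S m)%nat with (S (S (2 * m))) by lia.
  replace (S m + 1)%nat with (S (m + 1)) by lia.
  rewrite (fact_simpl (S (2*m))), (fact_simpl (2*m)), (fact_simpl m), !mult_INR.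
  pose proof (fact_pos (2*m)); pose proof (fact_pos m); pose proof (pos_INR m).
  set (A := INR (fact (2*m))) in *. set (B := INR (fact m)) in *.
  rewrite !S_INR, mult_INR. simpl pow. rewrite INR_IZR_INZ. simpl IZR.
  set (Mr := INR m) in *.
  assert (0 < 4 ^ (m+1)) by (apply pow_lt; lra).
  field. repeat split; lra.
Qed.

Lemma Kc_0 : Kc 0 = PI / 4.
Proof. unfold Kc, Binomial.C. simpl. field. Qed.

Lemma leibniz0 : is_series (fun j => (-1)^j * dd 0 j) (Kc 0).
Proof.
  rewrite Kc_0. pose proof Alt_PI_eq as H. unfold Alt_PI in H.
  revert H. destruct exist_PI as [l Hl]. intro H.
  replace (PI / 4) with l by lra.
  apply ser_lim. apply is_lim_seq_Reals.
  eapply Un_cv_ext; [|exact Hl]. intro N. apply sum_eq. intros j _.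
  unfold tg_alt, PI_tg. rewrite dd0, plus_INR, mult_INR. simpl INR. replace (1+1) with 2 by ring. reflexivity.
Qed.

Definition rho m := (2 * INR m + 3) / (2 * (INR m + 1)).
Definition RR m J := (-1)^J * dd m J * rho m * INR J / (2 * INR J - 2 * INR m - 1).

Lemma RR_step m j : (-1)^j * dd (S m) j - rho m * ((-1)^j * dd m j) = RR m (S j) - RR m j.
Proof.
  unfold RR, rho. pose proof (dd_rel m j) as DR. rewrite dd_S.
  pose proof (odd_nz j m) as O1. pose proof (odd_nz (S j) m) as O2.
  rewrite S_INR in *. simpl pow.
  pose proof (pos_INR j); pose proof (pos_INR m).
  set (J := INR j) in *; set (Mr := INR m) in *. set (s := (-1)^j).
  assert (HD : dd (S m) j = dd m j * (- (1 / 2 + Mr) * (3 / 2 + Mr)) / ((J - 1 / 2 - Mr) * (J + 3 / 2 + Mr))).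
  { assert (HX : (J - 1/2 - Mr) * (J + 3/2 + Mr) <> 0).
    { apply Rmult_integral_contrapositive; split; [intro; apply O1; lra | lra]. }
    apply (Rmult_eq_reg_r ((J - 1/2 - Mr) * (J + 3/2 + Mr))); [|exact HX].
    rewrite DR. field. split; [lra| intro; apply O1; lra]. }
  rewrite HD. field. repeat split; try lra.
  all: intro; apply O1; lra.
Qed.

Lemma RR_0 m : RR m 0 = 0.
Proof. unfold RR. rewrite INR_0. unfold Rdiv. ring. Qed.

Lemma RR_lim m : is_lim_seq (RR m) 0.
Proof.
  assert (Hr : 0 <= rho m) by (unfold rho; pose proof (pos_INR m); apply Rdiv_le_0_compat; lra).
  destruct m as [|m].
  - apply (lim_bound _ (rho 0) 0). intros n _.
    unfold RR. rewrite dd0, INR_0.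
    pose proof (pos_INR n). pose proof (odd_abs n 0) as OA. rewrite INR_0 in OA.
    destruct n as [|n].
    + rewrite INR_0. unfold Rdiv. rewrite Rmult_0_r, Rmult_0_l, Rabs_R0.
      apply Rmult_le_pos; [lra|]. left; apply Rinv_0_lt_compat; lra.
    + pose proof (pos_INR n). rewrite S_INR in *. set (N := INR n) in *.
      replace (2 * (N + 1) - 2 * 0 - 1) with (2 * N + 1) in * by ring.
      rewrite Rabs_right in OA by lra.
      unfold Rdiv. rewrite !Rabs_mult, Rabs_inv, Rabs_inv, pow_1_abs.
      rewrite (Rabs_right (rho 0)), (Rabs_right (N+1)), (Rabs_right (2 * N + 1)), (Rabs_right (2 * (N + 1) + 1)) by lra.
      apply (Rmult_le_reg_r ((2 * (N + 1) + 1) * (2 * N + 1) * (N + 1 + 1))).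
      { apply Rmult_lt_0_compat; [apply Rmult_lt_0_compat|]; lra. }
      field_simplify; try lra. nra.
  - set (m' := S m) in *. assert (Hm : (1 <= m')%nat) by (unfold m'; lia).
    apply is_lim_seq_abs_0.
    apply (is_lim_seq_le_le (fun _ => 0) _ (fun J => rho m' * Rabs (INR J * dd m' J))).
    + intro J. split; [apply Rabs_pos|]. unfold RR.
      pose proof (odd_abs J m') as OA. pose proof (odd_nz J m') as ON.
      replace ((-1) ^ J * dd m' J * rho m' * INR J / (2 * INR J - 2 * INR m' - 1))
        with ((-1)^J * (rho m' * (INR J * dd m' J)) * / (2 * INR J - 2 * INR m' - 1)) by (field; auto).
      rewrite !Rabs_mult, pow_1_abs, Rabs_inv, (Rabs_right (rho m')) by lra.
      pose proof (Rabs_pos (INR J * dd m' J)).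
      assert (/ Rabs (2 * INR J - 2 * INR m' - 1) <= 1).
      { apply Rle_trans with (/ 1); [apply Rinv_le_contravar; lra | rewrite Rinv_1; lra]. }
      assert (0 <= / Rabs (2 * INR J - 2 * INR m' - 1)) by (left; apply Rinv_0_lt_compat; lra).
      assert (0 <= rho m' * (Rabs (INR J) * Rabs (dd m' J))) by (apply Rmult_le_pos; [lra| apply Rmult_le_pos; apply Rabs_pos]). nra.
    + apply is_lim_seq_const.
    + replace (Finite 0) with (Rbar_mult (rho m') (Rbar_abs 0)) by (simpl; rewrite Rabs_R0; f_equal; ring).
      apply is_lim_seq_scal_l, is_lim_seq_abs, dd_lim; auto.
Qed.

Lemma leibniz m : is_series (fun j => (-1)^j * dd m j) (Kc m).
Proof.
  induction m; [apply leibniz0|].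
  apply ser_lim. apply ser_lim in IHm.
  apply (is_lim_seq_ext (fun J => rho m * sum_f_R0 (fun j => (-1)^j * dd m j) J + RR m (S J))).
  - intro J. rewrite scal_sum.
    rewrite (sum_eq (fun j => (-1)^j * dd (S m) j) (fun j => (-1)^j * dd m j * rho m + (RR m (S j) - RR m j))).
    + rewrite sum_plus, tele, RR_0. ring.
    + intros j _. rewrite <- RR_step. ring.
  - replace (Kc (S m)) with (rho m * Kc m + 0).
    + apply is_lim_seq_plus'.
      * apply (is_lim_seq_scal_l _ (rho m) (Kc m)) in IHm. exact IHm.
      * apply (is_lim_seq_incr_1 (RR m)), RR_lim.
    + rewrite Kc_S. unfold rho. pose proof (pos_INR m). field. lra.
Qed.

Lemma dd_sum m : (1 <= m)%nat -> is_series (dd m) ((1/2 + INR m) / (2 * INR m)).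
Proof.
  intros Hm. pose proof Hm as Hm'. apply le_INR in Hm'. rewrite INR_1 in Hm'.
  set (w := fun j => dd m j * (INR j + 1/2 + INR m)).
  apply ser_lim.
  apply (is_lim_seq_ext (fun J => (w 0%nat - w (S J)) / (2 * INR m))).
  - intro J. rewrite (sum_eq (dd m) (fun j => (w (S j) - w j) * - / (2 * INR m))).
    + rewrite <- scal_sum, tele. field. lra.
    + intros j _. unfold w. rewrite dd_S, S_INR. pose proof (pos_INR j).
      set (Mr := INR m) in *; set (Jr := INR j) in *. field. split; lra.
  - replace ((1/2 + INR m) / (2 * INR m)) with ((w 0%nat - 0) / (2 * INR m)).
    2:{ unfold w. rewrite dd_0, INR_0. field. lra. }
    apply is_lim_seq_div'; [|apply is_lim_seq_const|lra].
    apply is_lim_seq_minus'; [apply is_lim_seq_const|].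
    apply (is_lim_seq_incr_1 w). unfold w.
    replace (Finite 0) with (Finite (0 + (1/2 + INR m) * 0)) by (f_equal; ring).
    apply (is_lim_seq_ext (fun j => INR j * dd m j + (1/2 + INR m) * dd m j)); [intro; ring|].
    apply is_lim_seq_plus'; [apply dd_lim; auto|].
    apply (is_lim_seq_scal_l _ (1/2 + INR m) 0), dd_lim0; auto.
Qed.

Lemma ser_first (f : nat -> R) : (forall n, (0 < n)%nat -> f n = 0) -> is_series f (f 0%nat).
Proof.
  intros H. apply ser_lim. apply (is_lim_seq_ext (fun _ => f 0%nat)); [|apply is_lim_seq_const].
  intro N. induction N; [reflexivity|]. rewrite sum_S, (H (S N)) by lia. rewrite IHN. ring.
Qed.

Lemma ser_pos (f : nat -> R) V : (forall n, 0 < f n) -> is_series f V -> 0 < V.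
Proof.
  intros H HV. apply ser_lim in HV.
  assert (Rbar_le (f 0%nat) V).
  { apply (is_lim_seq_le (fun _ => f 0%nat) (fun N => sum_f_R0 f N)); auto; [|apply is_lim_seq_const].
    intro N. apply (sum_nonneg_le f N 0); [intro; left; auto| lia]. }
  simpl in H0. specialize (H 0%nat). lra.
Qed.

Lemma pow_m1_abs j : Rabs ((-1)^j) <= 1.
Proof. rewrite pow_1_abs; lra. Qed.

Lemma T0K m : (1 <= m)%nat -> TT m 0 * Kc m = 1.
Proof.
  intros Hm.
  destruct (interchange (cc m) LL (fun j => (-1)^j) (cc_abs_ex m Hm) LL_nonneg LL_z LL_sum1 pow_m1_abs)
    as [S [H1 H2]].
  assert (E1 : S = 1).
  { apply (ser_uniq _ _ _ H1).
    replace 1 with (cc m 0 * sum_f_R0 (fun j => LL 0 j * (-1)^j) 0).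
    2:{ simpl. rewrite cc_0, LL_00. ring. }
    apply (ser_first (fun n => cc m n * sum_f_R0 (fun j => LL n j * (-1)^j) n)).
    intros n Hn. pose proof (FI1 (-1) n ltac:(lra)) as F.
    unfold SS in F.
    rewrite (sum_eq _ (fun j => LL n j * MM (-1) j)) by (intros; rewrite MM_m1; reflexivity).
    apply lt_INR in Hn. rewrite INR_0 in Hn.
    assert (sum_f_R0 (fun j => LL n j * MM (-1) j) n = 0).
    { replace (INR n + 1 + -1) with (INR n) in F by ring.
      apply (Rmult_eq_reg_l (INR n)); [|lra]. rewrite F. ring. }
    rewrite H. ring. }
  subst S.
  pose proof (ser_scal _ _ (TT m 0) (leibniz m)) as HL.
  apply (ser_uniq (fun j => TT m 0 * ((-1)^j * dd m j))); auto.
  apply (ser_ext (fun j => TT m j * (-1)^j)); auto.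
  intro j. rewrite TT_dd by auto. ring.
Qed.

Lemma main_ge1 m eta : (1 <= m)%nat -> -1 < eta -> exists S,
  is_series (fun n => cc m n * mu eta n) S /\ is_series (fun j => dd m j * MM eta j) (Kc m * S).
Proof.
  intros Hm He.
  destruct (interchange (cc m) LL (MM eta) (cc_abs_ex m Hm) LL_nonneg LL_z LL_sum1 (fun j => MM_bound eta j ltac:(lra)))
    as [S [H1 H2]].
  exists S. split.
  - eapply ser_ext; [|exact H1]. intro n. simpl. f_equal.
    pose proof (FI1 eta n ltac:(lra)) as F. unfold SS in F. unfold mu.
    pose proof (pos_INR n). apply (Rmult_eq_reg_l (INR n + 1 + eta)); [|lra]. rewrite F. field. lra.
  - pose proof (ser_scal _ _ (Kc m) H2) as H3.
    eapply ser_ext; [|exact H3]. intro j. simpl. fold (TT m j). rewrite TT_dd by auto. pose proof (T0K m Hm). 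
    replace (Kc m * (TT m 0 * dd m j * MM eta j)) with ((TT m 0 * Kc m) * (dd m j * MM eta j)) by ring.
    rewrite H. ring.
Qed.

Lemma G_val m : (1 <= m)%nat -> is_series (cc m) ((1/2 + INR m) / (2 * INR m) / Kc m).
Proof.
  intros Hm.
  assert (Hw : forall j : nat, Rabs 1 <= 1) by (intro; rewrite Rabs_R1; lra).
  destruct (interchange (cc m) LL (fun _ => 1) (cc_abs_ex m Hm) LL_nonneg LL_z LL_sum1 Hw)
    as [S [H1 H2]].
  assert (E1 : is_series (cc m) S).
  { eapply ser_ext; [|exact H1]. intro n. simpl. rewrite (sum_eq _ (LL n)) by (intros; ring). rewrite LL_sum1. ring. }
  assert (E2 : is_series (fun j => TT m 0 * dd m j) S).
  { eapply ser_ext; [|exact H2]. intro j. simpl. fold (TT m j). rewrite TT_dd by auto. ring. }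
  pose proof (ser_scal _ _ (TT m 0) (dd_sum m Hm)) as E3.
  pose proof (ser_uniq _ _ _ E2 E3) as U. rewrite U in E1.
  replace ((1/2 + INR m) / (2 * INR m) / Kc m) with (TT m 0 * ((1/2 + INR m) / (2 * INR m))); auto.
  pose proof (T0K m Hm). pose proof (Kc_pos m).
  replace (TT m 0) with (/ Kc m) by (field_simplify_eq; lra). field.
  apply le_INR in Hm. rewrite INR_1 in Hm. lra.
Qed.

Lemma mu_rel eta n m : -1 < eta ->
  (INR n - 1/2 - INR m) * mu eta n = (1 + eta) - (eta + 3/2 + INR m) * mu eta n.
Proof. intros. unfold mu. pose proof (pos_INR n). field. lra. Qed.

Lemma term_rel m eta n : -1 < eta ->
  cc (S m) n * mu eta n * (eta + 3/2 + INR m) = (1 + eta) * cc (S m) n + (1/2 + INR m) * (cc m n * mu eta n).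
Proof.
  intros He. pose proof (cc_rel m n) as R. pose proof (mu_rel eta n m He) as Mu.
  apply (f_equal (fun z => z * mu eta n)) in R.
  replace (cc (S m) n * (INR n - 1 / 2 - INR m) * mu eta n) with (cc (S m) n * ((INR n - 1 / 2 - INR m) * mu eta n)) in R by ring.
  rewrite Mu in R. pose proof (pos_INR m). 
  apply (Rplus_eq_reg_r (- (cc (S m) n * mu eta n * (eta + 3/2 + INR m)) - (1/2 + INR m) * (cc m n * mu eta n))).
  ring_simplify. ring_simplify in R. lra.
Qed.

Lemma pos_chain eta : -1 < eta -> forall m, exists V, is_series (fun n => cc m n * mu eta n) V /\ 0 < V.
Proof.
  intros He m. induction m as [|m IH].
  - destruct (main_ge1 1 eta (le_n 1) He) as [S1 [H1 _]].
    pose proof (G_val 1 (le_n 1)) as HG.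
    set (G1 := (1 / 2 + INR 1) / (2 * INR 1) / Kc 1) in *.
    assert (HV : is_series (fun n => cc 0 n * mu eta n) (- 2 * ((1 + eta) * G1 - (eta + 3/2) * S1))).
    { pose proof (ser_plus _ _ _ _ (ser_scal _ _ (1+eta) HG) (ser_scal _ _ (-(eta + 3/2)) H1)) as HP.
      pose proof (ser_scal _ _ (-2) HP) as HQ.
      eapply ser_ext; [|replace (- 2 * ((1 + eta) * G1 - (eta + 3 / 2) * S1)) with
                          (-2 * ((1 + eta) * G1 + - (eta + 3 / 2) * S1)) by ring; exact HQ].
      intro n. simpl. pose proof (term_rel 0 eta n He) as T. rewrite INR_0 in T.
      lra. }
    exists (- 2 * ((1 + eta) * G1 - (eta + 3/2) * S1)). split; auto.
    apply (ser_pos _ _ (fun n => Rmult_lt_0_compat _ _ (cc0_pos n) (mu_pos eta n He)) HV).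
  - destruct IH as [V [HV HVp]].
    destruct (main_ge1 (S m) eta ltac:(lia) He) as [S1 [H1 _]].
    pose proof (G_val (S m) ltac:(lia)) as HG.
    set (G1 := (1 / 2 + INR (S m)) / (2 * INR (S m)) / Kc (S m)) in *.
    assert (HG1 : 0 < G1).
    { unfold G1. pose proof (Kc_pos (S m)). rewrite S_INR. pose proof (pos_INR m).
      apply Rdiv_lt_0_compat; auto. apply Rdiv_lt_0_compat; lra. }
    exists S1. split; auto.
    assert (HE : is_series (fun n => cc (S m) n * mu eta n * (eta + 3/2 + INR m))
                           ((1 + eta) * G1 + (1/2 + INR m) * V)).
    { eapply ser_ext; [|apply ser_plus; [apply ser_scal; exact HG| apply ser_scal; exact HV]].
      intro n. simpl. rewrite term_rel by auto. reflexivity. }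
    pose proof (ser_scal _ _ (eta + 3/2 + INR m) H1) as H2.
    assert (U : (eta + 3/2 + INR m) * S1 = (1 + eta) * G1 + (1/2 + INR m) * V).
    { apply (ser_uniq _ _ _ H2). eapply ser_ext; [|exact HE]. intro; simpl; ring. }
    pose proof (pos_INR m).
    assert (0 < (eta + 3/2 + INR m) * S1) by (rewrite U; nra).
    apply (Rmult_lt_reg_l (eta + 3/2 + INR m)); lra.
Qed.

Definition rr eta n := - (INR n + eta + 1) / ((2 * INR n - 1) * (2 * INR n + 1)).
Definition QQ eta n := rr eta n * MM eta n.

Lemma QQ_step eta n : -1 < eta ->
  dd 0 n * MM eta n - (2 * (2 * eta + 3) / 3) * (dd 1 n * MM eta n) = QQ eta (S n) - QQ eta n.
Proof.
  intros He. unfold QQ, rr. rewrite MM_S by lra.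
  pose proof (dd_rel 0 n) as DR. rewrite INR_0 in DR. rewrite dd0 in *.
  pose proof (odd_nz n 0) as O1. rewrite INR_0 in O1.
  rewrite S_INR. pose proof (pos_INR n). set (N := INR n) in *.
  assert (HX : (N - 1/2 - 0) * (N + 3/2 + 0) <> 0).
  { apply Rmult_integral_contrapositive; split; [intro; apply O1; lra | lra]. }
  assert (HD : dd 1 n = / (2 * N + 1) * (- (1 / 2 + 0) * (3 / 2 + 0)) / ((N - 1/2 - 0) * (N + 3/2 + 0))).
  { apply (Rmult_eq_reg_r ((N - 1/2 - 0) * (N + 3/2 + 0))); [|exact HX].
    rewrite DR. field. split; [lra|]. split; [lra|]. intro; apply O1; lra. }
  rewrite HD. field. repeat split; try lra. all: intro; apply O1; lra.
Qed.

Lemma QQ_lim eta : -1 < eta -> is_lim_seq (QQ eta) 0.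
Proof.
  intros He. apply (lim_bound _ (eta + 2) 1). intros n Hn.
  unfold QQ, rr. rewrite Rabs_mult.
  pose proof (MM_bound eta n ltac:(lra)). pose proof (Rabs_pos (MM eta n)).
  apply le_INR in Hn. rewrite INR_1 in Hn. set (N := INR n) in *.

  assert (Hr : Rabs (- (N + eta + 1) / ((2 * N - 1) * (2 * N + 1))) = (N + eta + 1) / ((2 * N - 1) * (2 * N + 1))).
  { unfold Rdiv. rewrite Ropp_mult_distr_l_reverse, Rabs_Ropp, Rabs_right; [reflexivity|].
    apply Rle_ge, Rmult_le_pos; [lra|]. left; apply Rinv_0_lt_compat; nra. }
  rewrite Hr.
  assert (0 <= (N + eta + 1) / ((2 * N - 1) * (2 * N + 1))) by (apply Rdiv_le_0_compat; nra).
  apply Rle_trans with ((N + eta + 1) / ((2 * N - 1) * (2 * N + 1))).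
  { rewrite <- (Rmult_1_r ((N + eta + 1) / ((2 * N - 1) * (2 * N + 1)))) at 2. apply Rmult_le_compat_l; lra. }
  apply (Rmult_le_reg_r ((2 * N - 1) * (2 * N + 1) * (N + 1))); [nra|].
  field_simplify; try nra.
  assert (0 <= (eta + 1) * (N - 1)) by nra.
  assert (0 <= (eta + 1) * (N - 1) * (N+1)) by nra.
  nra.
Qed.

Lemma f1_zero eta F : -1 < eta -> is_series (fun j => dd 1 j * MM eta j) F ->
  is_series (fun j => dd 0 j * MM eta j) (- (1 + eta) + (2 * (2 * eta + 3) / 3) * F).
Proof.
  intros He HF. apply ser_lim. apply ser_lim in HF.
  apply (is_lim_seq_ext (fun N => (2 * (2 * eta + 3) / 3) * sum_f_R0 (fun j => dd 1 j * MM eta j) N + QQ eta (S N) - QQ eta 0)).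
  - intro N. rewrite scal_sum.
    rewrite (sum_eq (fun j => dd 0 j * MM eta j) (fun j => dd 1 j * MM eta j * (2 * (2 * eta + 3) / 3) + (QQ eta (S j) - QQ eta j))).
    + rewrite sum_plus, tele. ring.
    + intros j _. rewrite <- QQ_step by auto. ring.
  - assert (Q0 : QQ eta 0 = 1 + eta) by (unfold QQ, rr; rewrite MM_0, INR_0; field).
    rewrite Q0.
    replace (- (1 + eta) + 2 * (2 * eta + 3) / 3 * F) with ((2 * (2 * eta + 3) / 3) * F + 0 - (1 + eta)) by ring.
    apply is_lim_seq_minus'; [|apply is_lim_seq_const].
    apply is_lim_seq_plus'.
    + apply (is_lim_seq_scal_l _ (2 * (2 * eta + 3) / 3) F) in HF. exact HF.
    + apply (is_lim_seq_incr_1 (QQ eta)), QQ_lim; auto.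
Qed.

Lemma all_m m eta : -1 < eta -> exists V,
  is_series (fun n => cc m n * mu eta n) V /\ 0 < V /\ is_series (fun j => dd m j * MM eta j) (Kc m * V).
Proof.
  intros He. destruct m as [|m].
  - destruct (main_ge1 1 eta (le_n 1) He) as [S1 [H1 H1']].
    pose proof (G_val 1 (le_n 1)) as HG.
    destruct (pos_chain eta He 0) as [V [HV HVp]].
    exists V. split; [auto|split; [auto|]].
    pose proof (f1_zero eta _ He H1') as HF.
    replace (Kc 0 * V) with (- (1 + eta) + 2 * (2 * eta + 3) / 3 * (Kc 1 * S1)); auto.
    assert (HV' : is_series (fun n => cc 0 n * mu eta n) (- 2 * ((1 + eta) * ((1 / 2 + INR 1) / (2 * INR 1) / Kc 1) - (eta + 3/2) * S1))).
    { pose proof (ser_plus _ _ _ _ (ser_scal _ _ (1+eta) HG) (ser_scal _ _ (-(eta + 3/2)) H1)) as HP.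
      pose proof (ser_scal _ _ (-2) HP) as HQ.
      eapply ser_ext; [|replace (- 2 * ((1 + eta) * ((1 / 2 + INR 1) / (2 * INR 1) / Kc 1) - (eta + 3 / 2) * S1)) with
                          (-2 * ((1 + eta) * ((1 / 2 + INR 1) / (2 * INR 1) / Kc 1) + - (eta + 3 / 2) * S1)) by ring; exact HQ].
      intro n. simpl. pose proof (term_rel 0 eta n He) as T. rewrite INR_0 in T. lra. }
    rewrite (ser_uniq _ _ _ HV HV').
    replace (Kc 1) with (Kc 0 * 3 / 2) by (rewrite Kc_S, INR_0; field).
    rewrite Kc_0. rewrite INR_1. pose proof PI_RGT_0. field. lra.
  - destruct (main_ge1 (S m) eta ltac:(lia) He) as [S1 [H1 H1']].
    destruct (pos_chain eta He (S m)) as [V [HV HVp]].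
    rewrite (ser_uniq _ _ _ H1 HV) in H1'.
    exists V; auto.
Qed.

Theorem mainTheorem17 (m : nat) (eta : R) (heta : -1 < eta) :
  exists F1 F2 : R,
    is_pFq [1/2 - INR m; 1; - eta] [3/2 + INR m; 2 + eta] (-1) F1 /\
    is_pFq [1/2 - INR m; 1/2; 1 + eta] [1; 2 + eta] 1 F2 /\
    PI = 4 ^ (m + 1) / (Binomial.C (2 * m) m * (2 * INR m + 1)) * (F1 / F2).
Proof.
  destruct (all_m m eta heta) as [V [HV [HVp HF]]].
  exists (Kc m * V), V. split; [|split].
  - unfold is_pFq. eapply ser_ext; [|exact HF]. intro n. simpl. rewrite hyp1 by auto. reflexivity.
  - unfold is_pFq. eapply ser_ext; [|exact HV]. intro n. simpl. rewrite hyp2 by auto. reflexivity.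
  - unfold Kc. pose proof (binom_pos (2*m) m). pose proof (pos_INR m).
    assert (0 < 4 ^ (m+1)) by (apply pow_lt; lra).
    field. repeat split; lra.
Qed.
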